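(* Let $G$ be a connected graph containing a longest path $L=x_0x_1\ldots x_p$ and a path $P$ of length at least $p-2$. Suppose $|V(P)\cap V(L)|\ge 1$ and let $r=\lceil p/2\rceil$. Then: (1) if $V(P)\cap\{x_r,x_{r+1},\ldots,x_p\}=\emptyset$, then $x_{r-1}\in V(P)$; (2) if $V(P)\cap\{x_0,\ldots,x_{r-1}\}=\emptyset$ and $\ell(P)\ge p-1$, then $x_r\in V(P)$; (3) if $V(P)\cap\{x_0,\ldots,x_{r-1}\}=\emptyset$ and $\ell(P)=p-2$, then $x_r\in V(P)$ or $x_{r+1}\in V(P)$.
   Context: All graphs are finite, simple and undirected. $\ell(P)$ denotes the length (number of edges) of a path $P$; a longest path is one of maximum length in $G$. *)

(* Defs.v *)
From mathcomp Require Import all_boot.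
Set Implicit Arguments. Unset Strict Implicit. Unset Printing Implicit Defensive.

Definition simple_graph (T : finType) (e : rel T) :=
  symmetric e /\ irreflexive e.

Definition connected_graph (T : finType) (e : rel T) :=
  forall x y : T, connect e x y.

Definition gpath (T : finType) (e : rel T) (s : seq T) : bool :=
  if s is x :: s' then path e x s' && uniq s else false.

Definition plen (T : Type) (s : seq T) : nat := (size s).-1.

Definition longest_path (T : finType) (e : rel T) (L : seq T) :=
  gpath e L /\ forall Q, gpath e Q -> plen Q <= plen L.

(* Main.v *)
Require Import Defs.
From mathcomp Require Import all_boot.
From mathcomp Require Import zify.

Lemma gpath_rev (T : finType) (e : rel T) s :
  symmetric e -> gpath e s -> gpath e (rev s).
Proof.
move=> sym; case: s => [|x s] //=.
case/lastP: s => [|t y] //= /andP[pth u].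
rewrite -rcons_cons rev_rcons /=.
have := rev_path e x (rcons t y); rewrite last_rcons belast_rcons => ->.
rewrite (@eq_path _ _ e); last by move=> a b /=; rewrite sym.
rewrite pth /=.
have : uniq (rev (rcons (x :: t) y)) by rewrite rev_uniq rcons_cons.
by rewrite rev_rcons.
Qed.

Lemma gpath_suffix (T : finType) (e : rel T) A w B :
  gpath e (A ++ w :: B) -> gpath e (w :: B).
Proof.
case: A => [|a A] //= /andP[pth u].
rewrite cat_path in pth; case/andP: pth => _ /= /andP[_ ->].
by move: u => /andP[_]; rewrite cat_uniq => /and3P[].
Qed.

Lemma gpath_take (T : finType) (e : rel T) s n :
  gpath e s -> gpath e (take n.+1 s).
Proof.
case: s => [|x s] //= /andP[pth u].
rewrite -{1}(cat_take_drop n s) cat_path in pth; case/andP: pth => -> _ /=.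
by have := @take_uniq _ (x :: s) n.+1 u.
Qed.

Lemma gpath_join (T : finType) (e : rel T) S w Q :
  gpath e (rcons S w) -> gpath e (w :: Q) -> ~~ has (fun v => v \in rcons S w) Q ->
  gpath e (rcons S w ++ Q).
Proof.
case: S => [|s S] //= /andP[p1 u1] /andP[p2 u2] dis.
rewrite cat_path p1 last_rcons p2 /=.
have := u1; rewrite -/(uniq (s :: rcons S w)) => u1'.
rewrite -/(uniq (s :: rcons S w ++ Q)) -cat_cons cat_uniq u1' dis /=.
by case/andP: u2.
Qed.

Lemma core (T : finType) (e : rel T) (M P : seq T) :
  symmetric e -> gpath e M -> (forall Q, gpath e Q -> plen Q <= plen M) ->
  gpath e P -> has (fun v => v \in P) M ->
  2 * find (fun v => v \in P) M + plen P <= 2 * plen M.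
Proof.
move=> sym gM lM gP hM.
case: M gM lM hM => [|x0 M'] //; set M := x0 :: M' => gM lM hM.
set k := find _ M.
have kM : k < size M by rewrite -has_find.
set w := nth x0 M k.
have wP : w \in P := nth_find x0 hM.
have pre : ~~ has (fun v => v \in P) (take k M) by rewrite has_take // ltnn.
have [A [B eP]] : exists A B, P = A ++ w :: B.
  by case/splitPr: wP => A B; exists A, B.
have uP : uniq P by case: (P) gP => [|? ?] // /andP[].
have [wA wB] : w \notin A /\ w \notin B.
  move: uP; rewrite eP cat_uniq => /and3P[_ h /andP[-> _]]; split=> //.
  by apply: contra h => wA; apply/hasP; exists w; rewrite ?inE ?eqxx.
have [Q [gQ sQ subQ]] : exists Q, [/\ gpath e (w :: Q), plen P <= 2 * size Q &
    forall v, v \in Q -> v \in P /\ v != w].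
  have szP : plen P = size A + size B by rewrite eP /plen size_cat /= addnS.
  case: (leqP (size A) (size B)) => hAB.
    exists B; split; first by apply: (@gpath_suffix _ _ A); rewrite -eP.
      by rewrite szP; lia.
    move=> v vB; rewrite eP mem_cat in_cons vB !orbT; split=> //.
    by apply: contraNneq wB => <-.
  exists (rev A); split.
  - apply: (@gpath_suffix _ _ (rev B)).
    by rewrite -cat_rcons -rev_cons -rev_cat -eP; apply: gpath_rev.
  - by rewrite size_rev szP; lia.
  move=> v; rewrite mem_rev => vA; rewrite eP mem_cat vA; split=> //.
  by apply: contraNneq wA => <-.
have gJ : gpath e (rcons (take k M) w ++ Q).
  apply: gpath_join => //.
    by rewrite /w -take_nth //; apply: gpath_take.
  apply/hasPn => v vQ; have [vP vw] := subQ v vQ.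
  rewrite mem_rcons in_cons negb_or vw /=.
  by apply: contraNN pre => vt; apply/hasP; exists v.
have := lM _ gJ; rewrite /plen size_cat size_rcons size_takel ?(ltnW kM) //=.
move: sQ; rewrite /plen; lia.
Qed.

Lemma find_ge (T : eqType) (a : pred T) s n :
  has a s -> ~~ has a (take n s) -> n <= find a s.
Proof. by move=> h; rewrite has_take // -leqNgt. Qed.

Theorem lemma3 (T : finType) (e : rel T) (x0 : T) (Ls P : seq T) :
  simple_graph e -> connected_graph e ->
  let L := x0 :: Ls in
  let p := plen L in
  let r := uphalf p in
  longest_path e L ->
  gpath e P ->
  p <= plen P + 2 ->
  has (fun v => v \in L) P ->
  [/\ (~~ has (fun v => v \in drop r L) P -> nth x0 L r.-1 \in P),
      (~~ has (fun v => v \in take r L) P -> p <= plen P + 1 -> nth x0 L r \in P)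
    & (~~ has (fun v => v \in take r L) P -> plen P + 2 = p ->
         (nth x0 L r \in P) || (nth x0 L r.+1 \in P))].
Proof.
move=> [sym _] _ L p r [gL lL] gP hp hP.
have hL : has (fun v => v \in P) L by rewrite has_sym.
have cL := @core _ _ _ _ sym gL lL gP hL.
have cR : 2 * find (fun v => v \in P) (rev L) + plen P <= 2 * plen (rev L).
  apply: core => //; first exact: gpath_rev.
    by move=> Q /lL; rewrite /plen size_rev.
  by rewrite has_rev.
have fL : find (fun v => v \in P) L < size L by rewrite -has_find.
have sL : size L = p.+1 by [].
have hr : r.*2 = odd p + p by rewrite uphalfK.
have ho : odd p <= 1 by case: odd.
have e1 : plen (rev L) = p by rewrite /plen size_rev.
rewrite e1 in cR. have e2 : plen L = p by []. rewrite e2 in cL.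
move: hr; rewrite -muln2 => hr.
split.
- move=> H; apply: contraT => nx.
  have r0 : 0 < r.
    case: (posnP r) => // r0; move: H; rewrite r0 drop0 has_sym.
    by rewrite hL.
  have rp : r <= p by lia.
  have : p - r + 2 <= find (fun v => v \in P) (rev L).
    apply: find_ge; first by rewrite has_rev.
    rewrite take_rev sL (_ : p.+1 - (p - r + 2) = r.-1); last by lia.
    rewrite (drop_nth x0); last by rewrite sL; lia.
    rewrite has_rev /= (negbTE nx) /=.
    have -> : drop r.-1 Ls = drop r L by rewrite -[in RHS](prednK r0).
    by rewrite has_sym.
  lia.
- move=> H hp1; apply: contraT => nx.
  have : r.+1 <= find (fun v => v \in P) L.
    apply: find_ge => //.
    rewrite (take_nth x0); last by rewrite sL; lia.
    by rewrite has_rcons (negbTE nx) /= -has_sym.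
  lia.
- move=> H hp2; apply: contraT; rewrite negb_or => /andP[n1 n2].
  have : r.+1 <= find (fun v => v \in P) L.
    apply: find_ge => //.
    rewrite (take_nth x0); last by rewrite sL; lia.
    by rewrite has_rcons (negbTE n1) /= -has_sym.
  case: (leqP (size L) r.+1) => hs; first by lia.
  have : r.+2 <= find (fun v => v \in P) L.
    apply: find_ge => //.
    rewrite (take_nth x0) // has_rcons (negbTE n2) orFb.
    rewrite (take_nth x0); last by lia.
    by rewrite has_rcons (negbTE n1) /= -has_sym.
  lia.
Qed.
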